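(* Let $\mathcal{L}:\mathbb{R}^d\to\mathbb{R}$ be differentiable and run full-batch MoFO with hyperparameters satisfying $\beta_1<\sqrt{\beta_2}<1$ and $\epsilon=0$ (arbitrary learning rates $\eta_t>0$). Then for every $t\ge1$ and every coordinate $1\le i\le d$, $$|\theta_{i,t}-\theta_{i,t-1}|\le\frac{1}{\sqrt{1-\beta_2}\,(1-\beta_1/\sqrt{\beta_2})}\cdot\eta_t\cdot\texttt{FLT}_\alpha(m_t)_i,$$ and moreover $\|\theta_t-\theta_{t-1}\|_2\le C\eta_t$, where $C=\dfrac{\sqrt{d\cdot(\alpha\%)+B}}{\sqrt{1-\beta_2}\,(1-\beta_1/\sqrt{\beta_2})}$.
   Context: The coordinates of $\mathbb{R}^d$ are partitioned into $B$ blocks of sizes $d_1,\dots,d_B$ with $\sum_kd_k=d$. Fix $\alpha\%\in(0,1]$. For $z\in\mathbb{R}^d$, $\texttt{FLT}_\alpha(z)\in\{0,1\}^d$ equals, in each block $k$, $1$ exactly on a set of $\lceil d_k\cdot\alpha\%\rceil$ indices with the largest absolute values of $z$ within that block (ties broken in favour of smaller indices), and $0$ elsewhere. Full-batch MoFO with $\beta_1,\beta_2\in(0,1)$, learning rates $\eta_t>0$, initial point $\theta_0$: $m_0=v_0=0$; for $t\ge1$, $g_t=\nabla\mathcal{L}(\theta_{t-1})$, $m_t=\beta_1m_{t-1}+(1-\beta_1)g_t$, $v_t=\beta_2v_{t-1}+(1-\beta_2)g_t\odot g_t$, $\hat m_t=m_t/(1-\beta_1^t)$, $\hat v_t=v_t/(1-\beta_2^t)$,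 $\theta_t=\theta_{t-1}-\eta_t(\hat m_t\odot\texttt{FLT}_\alpha(m_t))/\sqrt{\hat v_t}$ entrywise ($\epsilon=0$ means no additive constant in the denominator; a quotient with $\hat v_{i,t}=0$, where necessarily $\hat m_{i,t}=0$, is taken as $0$). Subscript $i,t$ denotes the $i$-th coordinate of the vector at iteration $t$. *)

(* Defs.v *)
From HB Require Import structures.
From mathcomp Require Import all_boot all_order all_algebra.
From mathcomp Require Import all_classical all_reals all_analysis.
Set Implicit Arguments. Unset Strict Implicit. Unset Printing Implicit Defensive.
Import Order.TTheory GRing.Theory Num.Theory.
Import numFieldNormedType.Exports.
Local Open Scope ring_scope.

Section MoFO.
Variables (R : realType) (d B : nat).

(* Partition of coordinates into B blocks: blk i is the block of coordinate i.
   Block k has size d_k = #|[set i | blk i == k]|. *)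

Definition blk_rank (blk : 'I_d -> 'I_B) (z : 'rV[R]_d) (i : 'I_d) : nat :=
  #|[set j : 'I_d | (blk j == blk i) &&
      ((`|z ord0 j| > `|z ord0 i|) || ((`|z ord0 j| == `|z ord0 i|) && (j < i)%N))]|.

Definition blk_size (blk : 'I_d -> 'I_B) (k : 'I_B) : nat :=
  #|[set j : 'I_d | blk j == k]|.

(* FLT_alpha(z) in {0,1}^d (as a real row vector): in block k, 1 exactly on the
   ceil(d_k * alpha) coordinates with largest |z| (ties -> smaller index). *)
Definition FLT (blk : 'I_d -> 'I_B) (alpha : R) (z : 'rV[R]_d) : 'rV[R]_d :=
  \row_i (if ((blk_rank blk z i)%:Z < Num.ceil ((blk_size blk (blk i))%:R * alpha))%R
          then 1 else 0).

Definition grad (L : 'rV[R]_d -> R) (x : 'rV[R]_d) : 'rV[R]_d :=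
  \row_i ('D_(delta_mx ord0 i : 'rV[R]_d) L x).

(* full-batch MoFO state (theta_t, m_t, v_t); eta t is the learning rate of step t.
   Division by 0 in MathComp is 0, matching the convention for hat v = 0. *)
Fixpoint mofo (L : 'rV[R]_d -> R) (blk : 'I_d -> 'I_B) (alpha beta1 beta2 : R)
  (eta : nat -> R) (theta0 : 'rV[R]_d) (t : nat) : 'rV[R]_d * 'rV[R]_d * 'rV[R]_d :=
  match t with
  | 0 => (theta0, 0, 0)
  | t'.+1 =>
    let: (th, m, v) := mofo L blk alpha beta1 beta2 eta theta0 t' in
    let g := grad L th in
    let m' := beta1 *: m + (1 - beta1) *: g in
    let v' := beta2 *: v + (1 - beta2) *: map_mx (fun x => x ^+ 2) g in
    let mh := (1 - beta1 ^+ t)^-1 *: m' in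
    let vh := (1 - beta2 ^+ t)^-1 *: v' in
    let F := FLT blk alpha m' in
    (\row_i (th ord0 i - eta t * (mh ord0 i * F ord0 i / Num.sqrt (vh ord0 i))), m', v')
  end.

Definition l2norm (x : 'rV[R]_d) : R := Num.sqrt (\sum_i x ord0 i ^+ 2).

End MoFO.

(* Main.v *)
Require Import Defs.
From HB Require Import structures.
From mathcomp Require Import all_boot all_order all_algebra.
From mathcomp Require Import all_classical all_reals all_analysis.
From mathcomp.algebra_tactics Require Import ring lra.
Import Order.TTheory GRing.Theory Num.Theory.
Import numFieldNormedType.Exports.
Local Open Scope ring_scope.
Section Comb.
Variables (R : realType) (d B : nat) (blk : 'I_d -> 'I_B) (z : 'rV[R]_d).

Definition bef (j i : 'I_d) : bool :=
  (`|z ord0 j| > `|z ord0 i|) || ((`|z ord0 j| == `|z ord0 i|) && (j < i)%N).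

Lemma bef_irr i : ~~ bef i i.
Proof. by rewrite /bef ltxx eqxx ltnn. Qed.

Lemma bef_trans i j l : bef i j -> bef j l -> bef i l.
Proof.
rewrite /bef => /orP [h1|/andP [/eqP e1 h1]] /orP [h2|/andP [/eqP e2 h2]].
- by rewrite (lt_trans h2 h1).
- by rewrite -e2 h1.
- by rewrite e1 h2.
- by rewrite e1 e2 eqxx (ltn_trans h1 h2) orbT.
Qed.

Lemma bef_total i j : i != j -> bef i j || bef j i.
Proof.
move=> ne; rewrite /bef.
case: (ltgtP `|z ord0 i| `|z ord0 j|) => //= e.
by rewrite -neq_ltn.
Qed.

Lemma rank_bef i j : blk j == blk i -> bef j i -> (blk_rank blk z j < blk_rank blk z i)%N.
Proof.
move=> bji hji; rewrite /blk_rank; apply: proper_card; apply/properP; split.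
- apply/fintype.subsetP => l; rewrite !inE => /andP [/eqP bl hl].
  rewrite bl (eqP bji) eqxx /=.
  have := @bef_trans l j i; rewrite /bef; apply => //.
- exists j; first by rewrite inE bji.
  by rewrite inE eqxx /= ltxx eqxx ltnn.
Qed.

Lemma count_le (k : 'I_B) (n : nat) :
  (#|[set i | (blk i == k) && (blk_rank blk z i < n)%N]| <= n)%N.
Proof.
set S := [set i | _].
pose f (i : 'I_d) : 'I_n.+1 := inord (blk_rank blk z i).
have fS i : i \in S -> val (f i) = blk_rank blk z i.
  by rewrite inE => /andP [_ h]; rewrite /f /= inordK // ltnS ltnW.
rewrite -(card_in_imset (f := f)).
  apply: leq_trans (_ : #|[set~ (ord_max : 'I_n.+1)]| <= n)%N; last by rewrite cardsC1 card_ord.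
  apply: subset_leq_card; apply/fintype.subsetP => x /imsetP [i iS ->].
  rewrite !inE; apply/eqP => /(congr1 val); rewrite fS //= => e.
  by move: iS; rewrite inE e ltnn andbF.
move=> i j iS jS /(congr1 val); rewrite fS // fS // => e.
apply/eqP; apply: contraT => ne.
move: iS jS; rewrite !inE => /andP [/eqP bi _] /andP [/eqP bj _].
have bb : blk j == blk i by rewrite bi bj.
have bb' : blk i == blk j by rewrite bi bj.
case/orP: (bef_total _ _ ne) => h.
- by move: (rank_bef _ _ bb' h); rewrite e ltnn.
- by move: (rank_bef _ _ bb h); rewrite e ltnn.
Qed.


Lemma FLT01 alpha i : FLT blk alpha z ord0 i = 0 \/ FLT blk alpha z ord0 i = 1.
Proof. by rewrite /FLT mxE; case: ifP => _; [right|left]. Qed.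

Lemma sumFLT alpha : 0 < alpha ->
  \sum_i FLT blk alpha z ord0 i <= d%:R * alpha + B%:R.
Proof.
move=> a0.
rewrite (partition_big blk predT) //=.
have -> : d%:R * alpha + B%:R =
   \sum_(k : 'I_B) ((blk_size blk k)%:R * alpha + 1).
  rewrite big_split /= -mulr_suml sumr_const card_ord.
  congr (_ * _ + _).
  rewrite -[in LHS](card_ord d) -sum1_card natr_sum.
  rewrite (partition_big blk predT) //=; apply: eq_bigr => k _.
  by rewrite /blk_size -sum1_card natr_sum; apply: eq_bigl => i; rewrite inE.
apply: ler_sum => k _.
set c := Num.ceil ((blk_size blk k)%:R * alpha).
rewrite (eq_bigr (fun i => if ((blk_rank blk z i)%:Z < c)%R then 1 else 0)); last first.
  by move=> i /eqP bi; rewrite /FLT mxE bi.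
rewrite -big_mkcondr sumr_const.
have cx : c%:~R < (blk_size blk k)%:R * alpha + 1.
  by rewrite -ltrBlDr; apply: (le_lt_trans _ (ceilB1_lt _)); rewrite rmorphB.
move: cx; case: c => n cx.
- apply: le_trans (ltW cx).
  rewrite -[n%:~R]/(n%:R) ler_nat.
  apply: leq_trans (count_le k n).
  by rewrite leq_eqVlt; apply/orP; left; apply/eqP; apply: eq_card => i; rewrite !inE.
- have -> : #|[pred i | (blk i == k) && ((blk_rank blk z i)%:Z < Negz n)%R]| = 0%N.
    apply: eq_card0 => i /=; rewrite !inE /=; apply/negbTE; rewrite negb_and; apply/orP; right; rewrite -leNgt; apply: le_trans (_ : 0 <= _) => //.
  rewrite mulr0n; apply: addr_ge0 => //; apply: mulr_ge0 => //; exact: ltW.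
Qed.
End Comb.
Section Inv.
Variables (R : realType) (d B : nat) (blk : 'I_d -> 'I_B)
  (L : 'rV[R]_d -> R) (alpha beta1 beta2 : R) (eta : nat -> R) (theta0 : 'rV[R]_d).
Hypotheses (b1 : 0 < beta1 < 1) (b2 : 0 < beta2 < 1) (b12 : beta1 < Num.sqrt beta2).

Let K := (Num.sqrt (1 - beta2) * (1 - beta1 / Num.sqrt beta2))^-1.

Lemma s2_gt0 : 0 < Num.sqrt beta2.
Proof. by case/andP: b2 => h _; rewrite sqrtr_gt0. Qed.

Lemma s_gt0 : 0 < Num.sqrt (1 - beta2).
Proof. by case/andP: b2 => _ h; rewrite sqrtr_gt0 subr_gt0. Qed.

Lemma rho_lt1 : beta1 / Num.sqrt beta2 < 1.
Proof. by rewrite ltr_pdivrMr ?s2_gt0 // mul1r. Qed.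

Lemma rho_ge0 : 0 <= beta1 / Num.sqrt beta2.
Proof. by case/andP: b1 => h _; rewrite divr_ge0 // ?ltW // s2_gt0. Qed.

Lemma K_gt0 : 0 < K.
Proof. by rewrite invr_gt0 mulr_gt0 ?s_gt0 // subr_gt0 rho_lt1. Qed.

Lemma hK : K * (Num.sqrt (1 - beta2) * (1 - beta1 / Num.sqrt beta2)) = 1.
Proof. by rewrite mulVf // gt_eqF // mulr_gt0 ?s_gt0 // subr_gt0 rho_lt1. Qed.

Lemma inv t i :
  0 <= (mofo L blk alpha beta1 beta2 eta theta0 t).2 ord0 i /\
  `|(mofo L blk alpha beta1 beta2 eta theta0 t).1.2 ord0 i| <=
     (1 - beta1) * K * Num.sqrt ((mofo L blk alpha beta1 beta2 eta theta0 t).2 ord0 i).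
Proof.
elim: t => [|t IH] /=; first by rewrite !mxE normr0 sqrtr0 mulr0.
move: IH; case: (mofo L blk alpha beta1 beta2 eta theta0 t) => [[th m] v] /= [v0 mb].
rewrite !mxE.
set g := 'D_(delta_mx ord0 i) L th.
case/andP: b1 => b10 b11; case/andP: b2 => b20 b21.
have v'0 : 0 <= beta2 * v ord0 i + (1 - beta2) * g ^+ 2.
  apply: addr_ge0; apply: mulr_ge0 => //; [exact: ltW | by rewrite subr_ge0 ltW | exact: sqr_ge0].
set v' := beta2 * v ord0 i + (1 - beta2) * g ^+ 2 in v'0 *.
split; first exact: v'0.
set s2 := Num.sqrt beta2.
set s := Num.sqrt (1 - beta2).
set rho := beta1 / s2.
have h1 : s2 * Num.sqrt (v ord0 i) <= Num.sqrt v'.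
  rewrite -sqrtrM; last exact: ltW.
  rewrite ler_sqrt // lerDl; apply: mulr_ge0; [by rewrite subr_ge0 ltW | exact: sqr_ge0].
have h2 : s * `|g| <= Num.sqrt v'.
  rewrite -sqrtr_sqr -sqrtrM; last by rewrite subr_ge0 ltW.
  rewrite ler_sqrt // lerDr; apply: mulr_ge0 => //; exact: ltW.
have e1 : beta1 * Num.sqrt (v ord0 i) = rho * (s2 * Num.sqrt (v ord0 i)).
  by rewrite /rho mulrA divfK // gt_eqF // s2_gt0.
have r0 := rho_ge0; have r1 := rho_lt1.
have key : beta1 * Num.sqrt (v ord0 i) + s * (1 - rho) * `|g| <= Num.sqrt v'.
  rewrite e1.
  have sg0 : 0 <= `|g| by [].
  have s0 : 0 <= s by apply: ltW; apply: s_gt0.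
  have r1' : 0 <= 1 - rho by rewrite subr_ge0 ltW.
  have -> : s * (1 - rho) * `|g| = (1 - rho) * (s * `|g|) by ring.
  apply: le_trans (lerD (ler_wpM2l r0 h1) (ler_wpM2l r1' h2)) _.
  by rewrite -mulrDl addrC subrK mul1r.
apply: le_trans (ler_normD _ _) _.
have b1' : 0 <= 1 - beta1 by rewrite subr_ge0 ltW.
rewrite !normrM (ger0_norm (ltW b10)) (ger0_norm b1').
apply: le_trans (_ : beta1 * ((1 - beta1) * K * Num.sqrt (v ord0 i)) + (1 - beta1) * `|g| <= _).
  by rewrite lerD2r ler_wpM2l // ltW.
apply: le_trans (_ : (1 - beta1) * K * (beta1 * Num.sqrt (v ord0 i) + s * (1 - rho) * `|g|) <= _); last first.
  by rewrite ler_wpM2l // mulr_ge0 // ltW // ?subr_gt0 // K_gt0.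
have -> : (1 - beta1) * K * (beta1 * Num.sqrt (v ord0 i) + s * (1 - rho) * `|g|)
   = beta1 * ((1 - beta1) * K * Num.sqrt (v ord0 i)) + (1 - beta1) * (K * (s * (1 - rho))) * `|g|.
  by ring.
by rewrite hK mulr1.
Qed.


Lemma step t i : (0 < t)%N -> 0 < eta t ->
  `|(mofo L blk alpha beta1 beta2 eta theta0 t).1.1 ord0 i
    - (mofo L blk alpha beta1 beta2 eta theta0 t.-1).1.1 ord0 i|
  <= K * eta t * FLT blk alpha (mofo L blk alpha beta1 beta2 eta theta0 t).1.2 ord0 i.
Proof.
case: t => [//|t] _ et.
have [] := inv t.+1 i.
rewrite /=.
case: (mofo L blk alpha beta1 beta2 eta theta0 t) => [[th m] v] /=.
set M := beta1 *: m + (1 - beta1) *: grad L th.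
set V := beta2 *: v + _.
set F := FLT blk alpha M ord0 i.
move=> V0 MB.
have eM : ((1 - beta1 ^+ t.+1)^-1 *: M) ord0 i = (1 - beta1 ^+ t.+1)^-1 * M ord0 i by rewrite mxE.
have eV : ((1 - beta2 ^+ t.+1)^-1 *: V) ord0 i = (1 - beta2 ^+ t.+1)^-1 * V ord0 i by rewrite mxE.
rewrite mxE eM eV -/F.
rewrite addrAC subrr add0r normrN.
have F01 : F = 0 \/ F = 1 by rewrite /F /FLT mxE; case: ifP => _; [right|left].
case/andP: b1 => b10 b11; case/andP: b2 => b20 b21.
have p1 : 0 < 1 - beta1 ^+ t.+1 by rewrite subr_gt0 exprn_ilt1 // ltW.
have p2 : 0 < 1 - beta2 ^+ t.+1 by rewrite subr_gt0 exprn_ilt1 // ltW.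
set c1 := (1 - beta1 ^+ t.+1)^-1.
set c2 := (1 - beta2 ^+ t.+1)^-1.
have c10 : 0 < c1 by rewrite invr_gt0.
have c20 : 0 < c2 by rewrite invr_gt0.
case: F01 => ->; first by rewrite !(mulr0, mul0r, normr0).
rewrite !mulr1 sqrtrM; last exact: ltW.
set sv := Num.sqrt (V ord0 i).
have sv0 : 0 <= sv by apply: sqrtr_ge0.
have hK0 := K_gt0.
case: (eqVneq sv 0) => [->|svn0].
  by rewrite mulr0 invr0 mulr0 mulr0 normr0 mulr_ge0 // ltW.
have svp : 0 < sv by rewrite lt_def svn0 sv0.
have sq1 : 1 <= Num.sqrt c2.
  rewrite -sqrtr1 ler_sqrt; last exact: ltW.
  by rewrite /c2 invf_ge1 // lerBlDr lerDl exprn_ge0 // ltW.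
rewrite normrM (gtr0_norm et) normf_div normrM (gtr0_norm c10).
rewrite (ger0_norm (_ : 0 <= Num.sqrt c2 * sv)); last by rewrite mulr_ge0 // sqrtr_ge0.
rewrite [K * _]mulrC; apply: ler_wpM2l; first exact: ltW.
rewrite ler_pdivrMr; last by rewrite mulr_gt0 // (lt_le_trans ltr01 sq1).
apply: le_trans (ler_wpM2l (ltW c10) MB) _.
have -> : c1 * ((1 - beta1) * K * sv) = (c1 * (1 - beta1)) * (K * sv) by ring.
have -> : K * (Num.sqrt c2 * sv) = Num.sqrt c2 * (K * sv) by ring.
apply: ler_wpM2r; first by rewrite mulr_ge0 // ltW.
apply: le_trans sq1.
rewrite mulrC ler_pdivrMr // mul1r lerB //.
by apply: ler_iXnr => //; apply: ltW.
Qed.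
End Inv.

Theorem lemma2 (R : realType) (d B : nat) (blk : 'I_d -> 'I_B)
  (L : 'rV[R]_d -> R) (alpha beta1 beta2 : R) (eta : nat -> R) (theta0 : 'rV[R]_d) :
  (forall x, differentiable L x) ->
  0 < alpha <= 1 ->
  0 < beta1 < 1 -> 0 < beta2 < 1 ->
  beta1 < Num.sqrt beta2 ->
  (forall t, (0 < t)%N -> 0 < eta t) ->
  let theta t := (mofo L blk alpha beta1 beta2 eta theta0 t).1.1 in
  let m t := (mofo L blk alpha beta1 beta2 eta theta0 t).1.2 in
  let K := (Num.sqrt (1 - beta2) * (1 - beta1 / Num.sqrt beta2))^-1 in
  forall t : nat, (0 < t)%N ->
    (forall i : 'I_d,
       `|theta t ord0 i - theta t.-1 ord0 i| <= K * eta t * FLT blk alpha (m t) ord0 i)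
    /\ l2norm (theta t - theta t.-1)
       <= Num.sqrt (d%:R * alpha + B%:R) * K * eta t.
Proof.
move=> _ /andP [a0 a1] hb1 hb2 hb12 heta theta m K t t0.
have et := heta t t0.
have st i : `|theta t ord0 i - theta t.-1 ord0 i| <= K * eta t * FLT blk alpha (m t) ord0 i.
  exact: (@step R d B blk L alpha beta1 beta2 eta theta0 hb1 hb2 hb12 t i t0 et).
split; first exact: st.
have K0 : 0 < K := @K_gt0 R beta1 beta2 hb2 hb12.
have Ke0 : 0 <= K * eta t by rewrite mulr_ge0 // ltW.
have X0 : 0 <= d%:R * alpha + B%:R by rewrite addr_ge0 // mulr_ge0 // ltW.
rewrite /l2norm.
apply: le_trans (_ : Num.sqrt ((d%:R * alpha + B%:R) * (K * eta t) ^+ 2) <= _); last first.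
  by rewrite sqrtrM // sqrtr_sqr (ger0_norm Ke0) mulrA.
rewrite ler_sqrt; last by rewrite mulr_ge0 // sqr_ge0.
apply: le_trans (_ : \sum_i (K * eta t) ^+ 2 * FLT blk alpha (m t) ord0 i <= _).
  apply: ler_sum => i _.
  set F := FLT blk alpha (m t) ord0 i.
  rewrite !mxE.
  have hF : F * F = F by rewrite /F; case: (@FLT01 R d B blk (m t) alpha i) => ->; rewrite ?mulr0 ?mulr1.
  have F0 : 0 <= F by rewrite /F; case: (@FLT01 R d B blk (m t) alpha i) => ->.
  rewrite -[_ ^+ 2]ger0_norm ?sqr_ge0 // normrX expr2.
  apply: le_trans (ler_pM _ _ (st i) (st i)) _ => //.
  have -> : (K * eta t * F) * (K * eta t * F) = (K * eta t) ^+ 2 * (F * F) by ring.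
  by rewrite hF.
rewrite -mulr_sumr mulrC ler_wpM2r ?sqr_ge0 //.
exact: (@sumFLT R d B blk (m t) alpha a0).
Qed.
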